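(* Let $n\ge 2$. (1) The set $\mathcal{O}_n(\mathbb{R})=\{O_M\mid M\in Mat^{tnz}_{2n}(\mathbb{R})\}$ of orientation sign matrices is in bijection with the set of right cosets of $K_n$ in $P_n$, and has cardinality $2^{n-1}(n-1)!$. (2) The set $\mathcal{S}^{tnz}_{2n}(\mathbb{R})$ of non-empty strata, which is in bijection with the orbit space $(\mathbb{Z}/2\mathbb{Z})\backslash\mathcal{O}_n(\mathbb{R})$, has cardinality $2^{n-2}(n-1)!$.
   Context: $Mat^{tnz}_{2n}(\mathbb{R})$ is the set of real $2\times n$ matrices all of whose $2\times2$ maximal minors are nonzero. For $M=(v_1,\dots,v_n)\in Mat^{tnz}_{2n}(\mathbb{R})$ the orientation sign matrix is $O_M=[\operatorname{sgn}\det(v_i,v_j)]_{1\le i,j\le n}$. The group $\mathbb{Z}/2\mathbb{Z}=\{\pm1\}$ acts on $\mathcal{O}_n(\mathbb{R})$ by $-1\bullet O_M=O_N$ with $N=(v_n,\dots,v_1)$ (so $O_N=-O_M=O_M^t$). $Gr^{tnz}_{2n}(\mathbb{R})=GL_2(\mathbb{R})\backslash Mat^{tnz}_{2n}(\mathbb{R})$; for $\mathcal{C}\subseteq\binom{[n]}{2}$ the stratum $\mathcal{S}^{tnz}_{\mathcal{C}}(\mathbb{R})$ consists of $GL_2(\mathbb{R})M$ such that the minor $\Delta_I(M)$ is positive exactly for $I\in\mathcal{C}$, or negative exactly for $I\in\mathcal{C}$; $\mathcal{S}^{tnz}_{2n}(\mathbb{R})$ is the set of non-empty strata. $P_n=\{(a_1,\dots,a_n)\in\{\pm1,\dots,\pm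 n\}^n\mid i\mapsto|a_i|\text{ is a permutation}\}$ is the signed permutation group, identified with the group of signed permutation matrices via $(a_1,\dots,a_n)\mapsto(\operatorname{sgn}(a_1)e_{|a_1|}^t,\dots,\operatorname{sgn}(a_n)e_{|a_n|}^t)$ (columns; $e_k$ standard basis vectors) with matrix multiplication; $|P_n|=2^nn!$. $K_n$ is the cyclic subgroup of order $2n$ generated by $(-n,1,2,\dots,n-1)\in P_n$. *)

(* Defs.v *)
From HB Require Import structures.
From mathcomp Require Import all_boot all_order all_algebra.
From mathcomp Require Import reals.
Set Implicit Arguments. Unset Strict Implicit. Unset Printing Implicit Defensive.
Import Order.TTheory GRing.Theory Num.Theory.
Local Open Scope ring_scope.

Definition minor2 (R : comNzRingType) (n : nat) (M : 'M[R]_(2, n)) (i j : 'I_n) : R :=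
  \det (\matrix_(r < 2, c < 2) M r (if c == ord0 then i else j)).

Definition tnz (R : comNzRingType) (n : nat) (M : 'M[R]_(2, n)) : Prop :=
  forall i j : 'I_n, (i < j)%N -> minor2 M i j != 0.

Definition orient (R : realDomainType) (n : nat) (M : 'M[R]_(2, n)) : 'M[int]_n :=
  \matrix_(i < n, j < n) sgz (minor2 M i j).

Definition isOrientMx (R : realDomainType) (n : nat) (O : 'M[int]_n) : Prop :=
  exists M : 'M[R]_(2, n), tnz M /\ orient M = O.

(* Signed permutations (a_1,...,a_n), a_i in {+-1,...,+-n}, i |-> |a_i| a permutation;
   indices are 0-based, values a_i are the paper's (1-based, signed) values. *)
Definition signed_perm (n : nat) (a : 'I_n -> int) : Prop :=
  (forall i, (0 < `|a i| <= n)%N) /\ injective (fun i => `|a i|%N).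

Definition spm (n : nat) (a : 'I_n -> int) : 'M[int]_n :=
  \matrix_(i < n, j < n) (if `|a j|%N == i.+1 then sgz (a j) else 0).

Definition isSignedPermMx (n : nat) (A : 'M[int]_n) : Prop :=
  exists a, signed_perm a /\ A = spm a.

Definition kgen (n : nat) : 'I_n -> int :=
  fun i => if val i == 0%N then - (n%:Z) else (val i)%:Z.

Definition mxpow (n : nat) (A : 'M[int]_n) (k : nat) : 'M[int]_n :=
  iter k (fun B : 'M[int]_n => A *m B) (1%:M : 'M[int]_n).

Definition inK (n : nat) (A : 'M[int]_n) : Prop :=
  exists k : nat, A = mxpow (spm (@kgen n)) k.

Definition same_right_coset (n : nat) (A B : 'M[int]_n) : Prop :=
  exists K, inK K /\ B = K *m A.

(* Stratum S_C, as a (GL_2-invariant) subset of Mat^{tnz}_{2n}(R),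
   i.e. the preimage of the stratum of Gr^{tnz}_{2n}(R).
   C is a subset of binom([n],2), encoded as pairs (i,j) with i<j. *)
Definition is_pairset (n : nat) (C : {set 'I_n * 'I_n}) : Prop :=
  forall p, p \in C -> (p.1 < p.2)%N.

Definition stratum (R : realDomainType) (n : nat) (C : {set 'I_n * 'I_n})
    (M : 'M[R]_(2, n)) : Prop :=
  tnz M /\
  ((forall i j : 'I_n, (i < j)%N -> (0 < minor2 M i j <-> (i, j) \in C)) \/
   (forall i j : 'I_n, (i < j)%N -> (minor2 M i j < 0 <-> (i, j) \in C))).

Definition same_stratum (R : realDomainType) (n : nat) (C D : {set 'I_n * 'I_n}) : Prop :=
  forall M : 'M[R]_(2, n), stratum C M <-> stratum D M.

Definition nonempty_stratum (R : realDomainType) (n : nat) (C : {set 'I_n * 'I_n}) : Prop :=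
  is_pairset C /\ exists M : 'M[R]_(2, n), stratum C M.

(* Z/2 action: (-1) . O = -O (= O^t); two elements of O_n lie in the same orbit. *)
Definition same_Z2_orbit (n : nat) (O O' : 'M[int]_n) : Prop :=
  O' = O \/ O' = - O.

(* Main.v *)
Require Import Defs.
From HB Require Import structures.
From mathcomp Require Import all_boot all_order all_algebra all_fingroup.
From mathcomp Require Import reals.
From mathcomp Require Import ring lra zify.
Set Implicit Arguments. Unset Strict Implicit. Unset Printing Implicit Defensive.
Import Order.TTheory GRing.Theory Num.Theory.
Local Open Scope ring_scope.

Lemma minor2E (R : comNzRingType) n (M : 'M[R]_(2, n)) i j :
  minor2 M i j = M 0 i * M 1 j - M 1 i * M 0 j.
Proof.
rewrite /minor2 (expand_det_row _ ord0) !big_ord_recl big_ord0 /cofactor.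
rewrite !det_mx11 !mxE /=.
rewrite /= expr0 expr1 !mul1r addr0 mulN1r mulrN.
have -> : lift ord0 (0 : 'I_1) = 1 by apply/val_inj.
have -> : (ord0 : 'I_2) = 0 by apply/val_inj.
by rewrite [M 1 i * _]mulrC.
Qed.


Lemma card_lt_ord n (m : nat) : (m <= n)%N -> #|[set k : 'I_n | (k < m)%N]| = m.
Proof.
move=> H.
have -> : [set k : 'I_n | (k < m)%N] = [set widen_ord H k | k in 'I_m].
  apply/setP => k; rewrite inE; apply/idP/imsetP.
    by move=> km; exists (Ordinal km) => //; apply/val_inj.
  by case=> k' _ ->; rewrite /= ltn_ord.
rewrite card_imset ?card_ord //.
by move=> x y /(congr1 val) /= xy; apply/val_inj.
Qed.

Lemma cnt n (q : 'I_n -> nat) : injective q -> (forall i, 0 < q i <= n)%N ->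
  forall j, #|[set i | (q i < q j)%N]| = (q j).-1.
Proof.
case: n q => [|n] q qi qb j; first by case: j.
have rv : forall i, nat_of_ord (inord (q i).-1 : 'I_n.+1) = (q i).-1.
  move=> i; rewrite inordK //; have := qb i; lia.
set r := fun i => (inord (q i).-1 : 'I_n.+1).
have ri : injective r.
  move=> x y /(congr1 val); rewrite /r /= !rv => h; apply: qi.
  have := qb x; have := qb y; lia.
have -> : [set i | (q i < q j)%N] = r @^-1: [set k : 'I_n.+1 | (k < r j)%N].
  apply/setP => i; rewrite !inE /r !rv; have := qb i; have := qb j; lia.
rewrite card_preimset // card_lt_ord /r rv //; have := qb j; lia.
Qed.

Definition F n (a : 'I_n -> int) : 'M[int]_n :=
  \matrix_(i, j) (sgz (a i) * sgz (a j) * sgz ((absz (a j))%:Z - (absz (a i))%:Z)).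

Lemma sgz_pm (z : int) : z != 0 -> sgz z * sgz z = 1.
Proof. by move=> h; rewrite mulz_sg h. Qed.

Lemma sgz_subn (x y : nat) : sgz (x%:Z - y%:Z) = if (y < x)%N then 1 else if x == y then 0 else -1.
Proof.
case: (ltngtP x y) => h.
- by rewrite ltr0_sgz ?subr_lt0 ?ltz_nat.
- by rewrite gtr0_sgz ?subr_gt0 ?ltz_nat.
- by rewrite h subrr.
Qed.

Lemma ltn_sgz (x y : nat) : (x < y)%N = (sgz (y%:Z - x%:Z) == 1).
Proof. by rewrite sgz_subn; case: (ltngtP x y). Qed.

Lemma sp_nz n (a : 'I_n -> int) i : signed_perm a -> a i != 0.
Proof. by case=> h _; rewrite -absz_eq0; have := h i; lia. Qed.

Lemma sp_uniq n (a b : 'I_n -> int) i0 : signed_perm a -> signed_perm b ->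
  F a = F b -> a i0 = 1 -> b i0 = 1 -> a =1 b.
Proof.
move=> sa sb FE a1 b1.
have Fij i j : F a i j = F b i j by rewrite FE.
have sj j : sgz (a j) = sgz (b j).
  have [->|ne] := eqVneq j i0; first by rewrite a1 b1.
  have := Fij i0 j; rewrite !mxE a1 b1 !sgz1 !mul1r !sgz_subn /=.
  have gt1 (c : 'I_n -> int) : signed_perm c -> c i0 = 1 -> (1 < absz (c j))%N.
    case=> cb ci c1; have := cb j; have : absz (c j) != absz (c i0).
      by apply/eqP => /ci /eqP; rewrite (negbTE ne).
    rewrite c1 /=; lia.
  by rewrite (gt1 _ sa a1) (gt1 _ sb b1) !mulr1.
have pj i j : sgz ((absz (a j))%:Z - (absz (a i))%:Z) = sgz ((absz (b j))%:Z - (absz (b i))%:Z).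
  have := Fij i j; rewrite !mxE !sj => h.
  have : sgz (b i) * sgz (b j) != 0 by rewrite mulf_eq0 !sgz_eq0 negb_or !(sp_nz _ sb).
  move=> nz; exact: (mulfI nz).
have ca j : #|[set i | (absz (a i) < absz (a j))%N]| = #|[set i | (absz (b i) < absz (b j))%N]|.
  by apply: eq_card => i; rewrite !inE !ltn_sgz pj.
move=> j.
have := ca j; rewrite (cnt sa.2 sa.1) (cnt sb.2 sb.1) => e.
have := sa.1 j; have := sb.1 j => hb ha.
have ea : absz (a j) = absz (b j) by lia.
by rewrite [a j]intEsg [b j]intEsg sj ea.
Qed.

Lemma mul_spm (R : pzRingType) m n (B : 'M[R]_(m, n)) (a : 'I_n -> int) i j (k : 'I_n) :
  absz (a j) = k.+1 ->
  (B *m map_mx (fun z : int => z%:~R) (spm a)) i j = B i k * (sgz (a j))%:~R.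
Proof.
move=> hk; rewrite !mxE (bigD1 k) //= big1 ?addr0.
  by rewrite !mxE hk eqxx.
move=> k' nk; rewrite !mxE hk.
case: eqP => [[e]|_]; last by rewrite mulr0.
by move: nk; rewrite (_ : k' = k) ?eqxx //; apply/val_inj.
Qed.

Lemma map_intz n (A : 'M[int]_n) : map_mx (fun z : int => z%:~R) A = A.
Proof. by apply/matrixP => i j; rewrite mxE intz. Qed.

Definition kval n (z : int) : int :=
  if z == 1 then - n%:Z else if z == -1 then n%:Z else if 0 < z then z - 1 else z + 1.

Lemma spm_K n (a : 'I_n -> int) : signed_perm a ->
  spm (@kgen n) *m spm a = spm (fun j => kval n (a j)).
Proof.
move=> [ab ai]; apply/matrixP => i j.
have hj := ab j.
have kl : ((absz (a j)).-1 < n)%N by lia.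
rewrite -[spm a]map_intz (mul_spm _ _ (k := Ordinal kl)) /=; last by lia.
rewrite !mxE /kgen /kval /=.
move: hj; case: (a j) => [p|p] /= hp.
  case: p hp => [|[|q]] hp //=.
    by rewrite intz mulr1.
  have -> : (q.+2%:Z - 1) = q.+1 by rewrite -addn1 PoszD addrK.
  by rewrite intz mulr1.
case: p hp => [|q] hp //=.
  have -> : sgz (-1 : int) = -1 by [].
  rewrite intz mulrN1 abszN; case: eqP => // _; by rewrite sgzN opprK.
have -> : sgz (Negz q.+1) = -1 by [].
have -> : Negz q.+1 + 1 = Negz q by rewrite !NegzE; lia.
have -> : sgz (Negz q) = -1 by [].
by rewrite intz mulrN1 subn1 /=; case: eqP => //; rewrite oppr0.
Qed.

Lemma kval_pos n (p : nat) : (1 < p)%N -> kval n p = (p.-1)%:Z.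
Proof. by case: p => [|[|p]] //= _; rewrite /kval /= -addn1 PoszD addrK. Qed.
Lemma kval_neg n (p : nat) : (1 < p)%N -> kval n (- p%:Z) = - (p.-1)%:Z.
Proof. by case: p => [|[|p]] //= _; rewrite /kval /=; lia. Qed.
Lemma kval_1 n : kval n 1 = - n%:Z. Proof. by []. Qed.
Lemma kval_N1 n : kval n (-1) = n%:Z. Proof. by []. Qed.

Lemma kval_cases n (z : int) : (0 < absz z)%N ->
  absz (kval n z) = (if absz z == 1%N then n else (absz z).-1) /\
  sgz (kval n z) = (if absz z == 1%N then (if (0 < n)%N then - sgz z else 0) else sgz z).
Proof.
case: z => [p|p] /= hp.
  case: p hp => [|[|p]] //= _.
    by rewrite abszN; split=> //; case: n => //.
have -> : Negz p = - (p.+1)%:Z by rewrite NegzE.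
case: p hp => [|p] _ /=.
  by rewrite kval_N1; split=> //; case: n.
rewrite kval_neg //.
by rewrite subn1 !sgzN.
Qed.

Lemma sp_kval n (a : 'I_n -> int) : signed_perm a -> signed_perm (fun j => kval n (a j)).
Proof.
move=> [ab ai]; split.
  move=> i; have := ab i => h; have [-> _] := kval_cases n (proj1 (andP h)); case: ifP; lia.
move=> i j /=; have := ab i => hi; have := ab j => hj.
have [-> _] := kval_cases n (proj1 (andP hi)); have [-> _] := kval_cases n (proj1 (andP hj)) => e.
apply: ai => /=; move: e; do 2 case: ifP; lia.
Qed.

Lemma F_kval n (a : 'I_n -> int) : signed_perm a -> F (fun j => kval n (a j)) = F a.
Proof.
move=> [ab ai]; apply/matrixP => i j; rewrite !mxE.
have := ab i => hi; have := ab j => hj.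
have [-> ->] := kval_cases n (proj1 (andP hi)); have [-> ->] := kval_cases n (proj1 (andP hj)).
have -> : (0 < n)%N by lia.
rewrite !sgz_subn.
move: hi hj; set pi := absz (a i); set pj := absz (a j) => hi hj.
case: (eqVneq pi 1%N) => ei; case: (eqVneq pj 1%N) => ej;
  rewrite ?ei ?ej ?eqxx /=.
all: do !case: ifP => ?; try (exfalso; lia); ring.
Qed.

Definition kit n m (a : 'I_n -> int) := fun j => iter m (kval n) (a j).

Lemma kit_sp n m (a : 'I_n -> int) : signed_perm a -> signed_perm (kit m a).
Proof. by move=> sa; elim: m => //= m IH; exact: (sp_kval IH). Qed.

Lemma kit_F n m (a : 'I_n -> int) : signed_perm a -> F (kit m a) = F a.
Proof.
move=> sa; elim: m => //= m IH.
by rewrite -IH -(F_kval (kit_sp m sa)).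
Qed.

Lemma kit_mx n m (a : 'I_n -> int) : signed_perm a ->
  mxpow (spm (@kgen n)) m *m spm a = spm (kit m a).
Proof.
move=> sa; elim: m => [|m IH]; first by rewrite /mxpow /= mul1mx.
rewrite /mxpow iterS -/(mxpow _ m) -mulmxA IH spm_K //; exact: kit_sp.
Qed.

Lemma it_pos n k (p : nat) : (k < p)%N -> iter k (kval n) p = (p - k)%N%:Z.
Proof.
elim: k => [|k IH] h /=; first by rewrite subn0.
rewrite IH; last by lia.
rewrite kval_pos; last by lia.
congr Posz; lia.
Qed.

Lemma it_neg n k (p : nat) : (k < p)%N -> iter k (kval n) (- p%:Z) = - (p - k)%N%:Z.
Proof.
elim: k => [|k IH] h /=; first by rewrite subn0.
rewrite IH; last by lia.
rewrite kval_neg; last by lia.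
congr (- Posz _); lia.
Qed.

Lemma kit_reach n (a : 'I_n -> int) i0 : signed_perm a -> exists m, kit m a i0 = 1.
Proof.
move=> [ab _]; have := ab i0; rewrite /kit.
case: (a i0) => [p|p] /= hp.
  by exists p.-1; rewrite it_pos; [congr Posz|]; lia.
have -> : Negz p = - (p.+1)%:Z by rewrite NegzE.
exists (n.-1 + 1 + p)%N; rewrite !iterD it_neg // subSnn /= kval_N1 it_pos; last by lia.
congr Posz; lia.
Qed.

Definition M0 (R : realDomainType) n : 'M[R]_(2, n) :=
  \matrix_(r, c) (if r == 0 then 1 else (c.+1)%:R).

Definition phi (R : realDomainType) n (A : 'M[int]_n) : 'M[int]_n :=
  orient (M0 R n *m map_mx (fun z : int => z%:~R) A).

Lemma minorX (R : realDomainType) n (a : 'I_n -> int) i j : signed_perm a ->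
  minor2 (M0 R n *m map_mx (fun z : int => z%:~R) (spm a)) i j =
  ((sgz (a i) * sgz (a j) * ((absz (a j))%:Z - (absz (a i))%:Z)) %:~R).
Proof.
move=> [ab _].
have kl (k : 'I_n) : ((absz (a k)).-1 < n)%N by have := ab k; lia.
have kk (k : 'I_n) : absz (a k) = (Ordinal (kl k)).+1 by have := ab k => /= ?; lia.
rewrite minor2E !(mul_spm _ _ (kk i)) !(mul_spm _ _ (kk j)) !mxE /=.
rewrite -!kk.
rewrite !rmorphM /= !rmorphB /=.
have nz (k : nat) : (k%:Z)%:~R = k%:R :> R by [].
rewrite !nz; ring.
Qed.

Lemma phi_spm (R : realDomainType) n (a : 'I_n -> int) : signed_perm a ->
  phi R (spm a) = F a.
Proof.
move=> sa; apply/matrixP => i j; rewrite !mxE minorX // sgz_int !sgzM !sgz_id.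
by [].
Qed.

Lemma tnz_spm (R : realDomainType) n (a : 'I_n -> int) : signed_perm a ->
  tnz (M0 R n *m map_mx (fun z : int => z%:~R) (spm a)).
Proof.
move=> sa i j ij; rewrite minorX // intr_eq0 !mulf_eq0 !sgz_eq0 !(negbTE (sp_nz _ sa)) /=.
rewrite subr_eq0; apply/negP => /eqP [] /(sa.2) e.
by move: ij; rewrite e ltnn.
Qed.

Lemma isO_F (R : realDomainType) n (a : 'I_n -> int) : signed_perm a -> isOrientMx R (F a).
Proof.
move=> sa; exists (M0 R n *m map_mx (fun z : int => z%:~R) (spm a)); split.
  exact: tnz_spm.
exact: phi_spm.
Qed.

Lemma minor2_anti (R : comNzRingType) n (M : 'M[R]_(2, n)) i j :
  minor2 M j i = - minor2 M i j.
Proof. rewrite !minor2E; ring. Qed.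

Lemma minor2_ii (R : comNzRingType) n (M : 'M[R]_(2, n)) i : minor2 M i i = 0.
Proof. rewrite !minor2E; ring. Qed.

Lemma tnz_ne (R : realFieldType) n (M : 'M[R]_(2, n)) : tnz M ->
  forall i j, i != j -> minor2 M i j != 0.
Proof.
move=> h i j; rewrite neq_ltn => /orP [] ij; first exact: h.
by rewrite minor2_anti oppr_eq0; apply: h.
Qed.

Lemma col_nz (R : realFieldType) n (M : 'M[R]_(2, n)) : (1 < n)%N -> tnz M ->
  forall i, (M 0 i != 0) || (M 1 i != 0).
Proof.
move=> n2 h i; case: n M n2 h i => [|n] M n2 h i; first by case: i.
set j : 'I_n.+1 := inord (if val i == 0%N then 1 else 0).
have ji : i != j.
  apply/eqP => /(congr1 val); rewrite /j /= inordK; last by case: (val i == 0%N); lia.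
  by case: eqP => // ->.
have := tnz_ne h ji; rewrite minor2E.
by apply: contraR; rewrite negb_or !negbK => /andP [/eqP -> /eqP ->]; rewrite !mul0r subrr.
Qed.

Lemma exists_t (R : realFieldType) n (M : 'M[R]_(2, n)) :
  (forall i, (M 0 i != 0) || (M 1 i != 0)) ->
  exists t : R, forall i, M 0 i + t * M 1 i != 0.
Proof.
move=> cz; exists (1 + \sum_k `|M 0 k / M 1 k|) => i.
have [e|ne] := eqVneq (M 1 i) 0.
  by have := cz i; rewrite e eqxx orbF mulr0 addr0.
have le : `|M 0 i / M 1 i| <= \sum_k `|M 0 k / M 1 k|.
  rewrite (bigD1 i) //= lerDl; apply: sumr_ge0 => k _; exact: normr_ge0.
have : 0 < M 0 i / M 1 i + (1 + \sum_k `|M 0 k / M 1 k|).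
  have := ler_norm (- (M 0 i / M 1 i)); rewrite normrN; lra.
have -> : M 0 i + (1 + \sum_k `|M 0 k / M 1 k|) * M 1 i =
  M 1 i * (M 0 i / M 1 i + (1 + \sum_k `|M 0 k / M 1 k|)).
  by field.
by move=> h; rewrite mulf_eq0 negb_or ne /= gt_eqF.
Qed.

Lemma orient_sp (R : realFieldType) n (M : 'M[R]_(2, n)) : (1 < n)%N -> tnz M ->
  exists a : 'I_n -> int, signed_perm a /\ orient M = F a.
Proof.
move=> n2 h.
have [t ht] := exists_t (col_nz n2 h).
set l := fun i => M 0 i + t * M 1 i.
set y := fun i => M 1 i / l i.
have key i j : minor2 M i j = l i * l j * (y j - y i).
  rewrite minor2E /y; have := ht i; have := ht j; rewrite -/(l i) -/(l j) => hj hi.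
  rewrite /l; field; rewrite -/(l i) -/(l j); by rewrite hi hj.
have yi : injective y.
  move=> i j e; apply/eqP; apply: contraT => ne.
  by have := tnz_ne h ne; rewrite key e subrr mulr0 eqxx.
set rk := fun i => #|[set k | y k < y i]|.
have rkmono i j : y i < y j -> (rk i < rk j)%N.
  move=> lt; apply: proper_card; apply/properP; split.
    by apply/subsetP => k; rewrite !inE => /lt_trans; apply.
  by exists i; rewrite !inE ?lt // ltxx.
have rkn i : (rk i < n)%N.
  have := @proper_card _ [set k | y k < y i] [set: 'I_n]; rewrite cardsT card_ord; apply.
  by apply/properP; split; [apply: subsetT | exists i; rewrite !inE ?ltxx].
have sgy i j : sgz (y j - y i) = sgz ((rk j)%:Z - (rk i)%:Z).
  rewrite sgz_subn; case: (ltgtP (y i) (y j)) => c.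
  - by rewrite (rkmono _ _ c) gtr0_sgz // subr_gt0.
  - have := rkmono _ _ c => c'; rewrite ltr0_sgz ?subr_lt0 //.
    have -> : (rk i < rk j)%N = false by lia. by have -> : (rk j == rk i) = false by lia.
  - by rewrite (yi _ _ c) ltnn eqxx subrr sgz0.
set a := fun i => sgz (l i) * (rk i).+1%:Z.
have sl i : sgz (l i) * sgz (l i) = 1 by rewrite mulz_sg ht.
have aabs i : absz (a i) = (rk i).+1.
  rewrite /a abszM; have := sl i; case: (sgz (l i)) => [[|[|k]]|[|k]] //=; lia.
have asg i : sgz (a i) = sgz (l i).
  by rewrite /a sgzM sgz_id [sgz (Posz _)]gtr0_sgz ?mulr1.
exists a; split.
  split; first by move=> i; rewrite aabs; have := rkn i; lia.
  move=> i j /=; rewrite !aabs => -[e]; apply: yi.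
  by case: (ltgtP (y i) (y j)) => // /rkmono; rewrite e ltnn.
apply/matrixP => i j; rewrite !mxE !asg !aabs key !sgzM sgy !sgz_subn ltnS eqSS //.
Qed.

Lemma iter_n n (z : int) : (0 < absz z <= n)%N -> iter n (kval n) z = - z.
Proof.
case: z => [p|p] /= hp.
  have -> : n = ((n - p) + 1 + p.-1)%N by lia.
  rewrite !iterD it_pos; last by lia.
  have -> : (p - p.-1)%N = 1%N by lia.
  rewrite /= kval_1 it_neg; last by lia.
  congr (- Posz _); lia.
have -> : Negz p = - (p.+1)%:Z by rewrite NegzE.
have -> : n = ((n - p.+1) + 1 + p)%N by lia.
rewrite !iterD it_neg; last by lia.
have -> : (p.+1 - p)%N = 1%N by lia.
rewrite /= kval_N1 it_pos; last by lia.
rewrite opprK; congr Posz; lia.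
Qed.

Lemma iter_2n n (z : int) : (0 < absz z <= n)%N -> iter (n + n) (kval n) z = z.
Proof.
move=> h; rewrite iterD iter_n // iter_n ?opprK //; by rewrite abszN.
Qed.

Lemma spm_ext n (a b : 'I_n -> int) : a =1 b -> spm a = spm b.
Proof. by move=> e; apply/matrixP => i j; rewrite !mxE e. Qed.

Lemma F_ext n (a b : 'I_n -> int) : a =1 b -> F a = F b.
Proof. by move=> e; apply/matrixP => i j; rewrite !mxE !e. Qed.

Lemma kitD n m1 m2 (a : 'I_n -> int) : kit (m1 + m2) a =1 kit m1 (kit m2 a).
Proof. by move=> j; rewrite /kit iterD. Qed.

Lemma kit_2n n c (a : 'I_n -> int) : signed_perm a -> kit ((n + n) * c) a =1 a.
Proof.
move=> [ab _]; elim: c => [|c IH] j; first by rewrite muln0.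
rewrite mulnS kitD /kit iter_2n; first exact: IH.
rewrite -/(kit _ _ j) IH; exact: ab.
Qed.

Lemma spm_inj n (b c : 'I_n -> int) : signed_perm b -> signed_perm c ->
  spm b = spm c -> b =1 c.
Proof.
move=> [bb _] [cb _] e j.
have kl : ((absz (b j)).-1 < n)%N by have := bb j; lia.
have := congr1 (fun A : 'M[int]_n => A (Ordinal kl) j) e; rewrite !mxE /=.
have -> : (absz (b j) == (absz (b j)).-1.+1) by have := bb j; lia.
case: eqP => [ec|_]; last by move/eqP; rewrite sgz_eq0 -absz_eq0 => /eqP; have := bb j; lia.
move=> es; rewrite [b j]intEsg [c j]intEsg es ec; congr (_ * Posz _); have := bb j; lia.
Qed.

Lemma coset_F n (a b : 'I_n -> int) : (0 < n)%N -> signed_perm a -> signed_perm b ->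
  (F a = F b <-> same_right_coset (spm a) (spm b)).
Proof.
move=> n0 sa sb; split.
  move=> e.
  have i0 : 'I_n by exists 0%N.
  have [m1 h1] := kit_reach i0 sb; have [m2 h2] := kit_reach i0 sa.
  have e2 : kit m2 a =1 kit m1 b.
    apply: (sp_uniq (kit_sp m2 sa) (kit_sp m1 sb) _ h2 h1).
    by rewrite !kit_F.
  exists (mxpow (spm (@kgen n)) ((n + n) * m1 - m1 + m2)); split; first by eexists.
  rewrite kit_mx //; apply: spm_ext => j.
  rewrite kitD.
  have -> : kit ((n + n) * m1 - m1) (kit m2 a) j = kit ((n + n) * m1 - m1) (kit m1 b) j by rewrite /kit -/(kit m2 a j) e2.
  rewrite -kitD.
  rewrite subnK; last by apply: leq_pmull; lia.
  by rewrite kit_2n.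
move=> [K [[m ->] e]].
rewrite kit_mx // in e.
by rewrite (F_ext (spm_inj sb (kit_sp m sa) e)) kit_F.
Qed.

Definition T1 (n' : nat) := ({perm 'I_n'.+1} * {ffun 'I_n'.+1 -> bool})%type.

Definition sgb (b : bool) : int := if b then -1 else 1.

Definition mk n' (x : T1 n') : 'I_n'.+2 -> int := fun i =>
  if val i == 0%N then 1 else sgb (x.2 (inord i.-1)) * (x.1 (inord i.-1) : nat).+2%:Z.

Lemma sgb_abs b (p : nat) : absz (sgb b * p%:Z) = p.
Proof. by case: b; rewrite /sgb ?mulN1r ?mul1r ?abszN. Qed.
Lemma sgb_sgz b (p : nat) : sgz (sgb b * p.+1%:Z) = sgb b.
Proof. by case: b; rewrite /sgb ?mulN1r ?mul1r ?sgzN. Qed.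

Lemma mk_abs n' (x : T1 n') (i : 'I_n'.+2) : absz (mk x i) = if val i == 0%N then 1%N else (x.1 (inord i.-1) : nat).+2.
Proof. by rewrite /mk; case: eqP => // _; rewrite sgb_abs. Qed.

Lemma mk_sp n' (x : T1 n') : signed_perm (mk x).
Proof.
split.
  move=> i; rewrite mk_abs; case: eqP => // _; have := ltn_ord (x.1 (inord i.-1)); lia.
move=> i j /=; rewrite !mk_abs.
case: eqP => ei; case: eqP => ej // e.
- by apply/val_inj; rewrite /= ei ej.
  move: e => [] /val_inj /perm_inj.
  have hi : (i.-1 <= n')%N by have := ltn_ord i; lia.
  have hj : (j.-1 <= n')%N by have := ltn_ord j; lia.
  move=> /(congr1 val); rewrite /= !inordK // ?inordK //; try lia.
  move=> e; apply/val_inj.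
  move: ei ej e; case: i {hi} => [i ?]; case: j {hj} => [j ?] /=; lia.
Qed.

Lemma mk_0 n' (x : T1 n') : mk x ord0 = 1. Proof. by []. Qed.

Lemma mk_inj n' (x y : T1 n') : mk x =1 mk y -> x = y.
Proof.
move=> e.
have h k : x.1 k = y.1 k /\ x.2 k = y.2 k.
  have hk : val (inord k.+1 : 'I_n'.+2) = k.+1.
    by rewrite /= inordK //; have := ltn_ord k; lia.
  have := e (inord k.+1); rewrite /mk hk /=.
  have hk' : nat_of_ord (inord k.+1 : 'I_n'.+2) = k.+1 by exact: hk.
  rewrite hk' /=.
  have -> : (inord k : 'I_n'.+1) = k by apply/val_inj; rewrite /= inordK.
  case: (x.2 k); case: (y.2 k); rewrite /sgb /= ?mulN1r ?mul1r => h; split => //;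
    try (apply/val_inj; rewrite /=); lia.
case: x y e h => [s1 f1] [s2 f2] e h /=.
congr pair; first by apply/permP => k; have [] := h k.
by apply/ffunP => k; have [] := h k.
Qed.

Lemma mk_surj n' (a : 'I_n'.+2 -> int) : signed_perm a -> a ord0 = 1 -> exists x, mk x =1 a.
Proof.
move=> [ab ai] a0.
have ge2 (i : 'I_n'.+2) : val i != 0%N -> (2 <= absz (a i) <= n'.+2)%N.
  move=> ne; have := ab i; have : absz (a i) != absz (a ord0).
    by apply/eqP => /ai e; move: ne; rewrite e.
  rewrite a0 /=; lia.
have ik (k : 'I_n'.+1) : val (inord k.+1 : 'I_n'.+2) = k.+1.
  by rewrite /= inordK //; have := ltn_ord k; lia.
have gk (k : 'I_n'.+1) : (2 <= absz (a (inord k.+1)) <= n'.+2)%N by apply: ge2; rewrite ik.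
pose f (k : 'I_n'.+1) : 'I_n'.+1 := inord (absz (a (inord k.+1)) - 2).
have fv k : nat_of_ord (f k) = (absz (a (inord k.+1)) - 2)%N.
  by rewrite /f inordK //; have := gk k; lia.
have finj : injective f.
  move=> k1 k2 /(congr1 val) /=; rewrite -/(nat_of_ord (f k1)) -/(nat_of_ord (f k2)) !fv.
  have := gk k1; have := gk k2 => h2 h1 e.
  have : absz (a (inord k1.+1)) = absz (a (inord k2.+1)) by lia.
  move/ai/(congr1 val); rewrite !ik => -[] e'; exact: val_inj.
exists (perm finj, [ffun k : 'I_n'.+1 => (a (inord k.+1) < 0)]) => i.
rewrite /mk /=; case: eqP => [e|ne].
  by rewrite -a0; congr a; apply/val_inj.
have ei : (inord (inord i.-1 : 'I_n'.+1).+1 : 'I_n'.+2) = i.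
  apply/val_inj; rewrite /= !inordK //; move: ne; case: i => [i hi] /= ?; lia.
rewrite permE ffunE -/(nat_of_ord (f _)) fv ei.
have := ge2 i (introN eqP ne) => h.
have -> : ((absz (a i) - 2).+2 = absz (a i))%N by lia.
rewrite [in RHS](intEsg (a i)); congr (_ * _).
rewrite /sgb; case: (intP (a i)) h => //.
Qed.

Lemma mk_01 n' (x : T1 n') : F (mk x) ord0 (inord 1) = sgb (x.2 ord0).
Proof.
rewrite mxE mk_0 sgz1 mul1r.
have h1 : val (inord 1 : 'I_n'.+2) = 1%N by rewrite /= inordK.
rewrite /mk h1 /=.
have h1' : nat_of_ord (inord 1 : 'I_n'.+2) = 1%N by exact: h1.
rewrite h1' /=.
have -> : (inord 0 : 'I_n'.+1) = ord0 by apply/val_inj; rewrite /= inordK.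
rewrite sgb_sgz sgb_abs.
by rewrite gtr0_sgz ?mulr1 // subr_gt0 ltz_nat.
Qed.


Definition psi n (C : {set 'I_n * 'I_n}) : 'M[int]_n :=
  \matrix_(i, j) (if (i < j)%N then (if (i, j) \in C then 1 else -1)
                  else if (j < i)%N then (if (j, i) \in C then -1 else 1) else 0).

Lemma sgz_pos_iff (R : realDomainType) (x : R) : x != 0 -> (0 < x <-> sgz x = 1).
Proof.
move=> nz; split; first exact: gtr0_sgz.
by move=> h; rewrite -sgz_gt0 h.
Qed.

Lemma sgz_cases (R : realDomainType) (x : R) : x != 0 -> sgz x = 1 \/ sgz x = -1.
Proof. rewrite -sgz_eq0; case: sgzP => // _ _; by [right|left]. Qed.

Lemma orient_psi (R : realDomainType) n (M : 'M[R]_(2, n)) C : tnz M ->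
  (orient M = psi C <-> forall i j : 'I_n, (i < j)%N -> (0 < minor2 M i j <-> (i, j) \in C)).
Proof.
move=> t; split.
  move=> e i j ij; have := congr1 (fun A : 'M[int]_n => A i j) e; rewrite !mxE ij.
  rewrite (sgz_pos_iff (t i j ij)) => ->.
  by case: (_ \in C).
move=> h; apply/matrixP => i j; rewrite !mxE.
case: (ltngtP i j) => c.
- have := h i j c; rewrite (sgz_pos_iff (t i j c)).
  case: (_ \in C) => -[h1 h2]; first by apply: h2.
  by case: (sgz_cases (t i j c)) => e; rewrite e //; have := h1 e.
- rewrite minor2_anti sgzN; have := h j i c; rewrite (sgz_pos_iff (t j i c)).
  case: (_ \in C) => -[h1 h2]; first by rewrite h2.
  by case: (sgz_cases (t j i c)) => e; rewrite e //; have := h1 e.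
- have -> : i = j by apply/val_inj; exact: c.
  by rewrite minor2_ii sgz0.
Qed.

Lemma psiN n (C : {set 'I_n * 'I_n}) : - psi C = psi (~: C).
Proof.
apply/matrixP => i j; rewrite !mxE !inE.
case: (ltngtP i j) => _; last by rewrite oppr0.
  by case: (_ \in C).
by case: (_ \in C).
Qed.

Lemma stratum_iff (R : realDomainType) n (C : {set 'I_n * 'I_n}) (M : 'M[R]_(2, n)) :
  stratum C M <-> tnz M /\ (orient M = psi C \/ orient M = - psi C).
Proof.
split.
  move=> [t [h|h]]; split => //; [left|right]; first by apply/orient_psi.
  rewrite psiN; apply/orient_psi => // i j ij; rewrite inE; split.
    move=> p; apply/negP => /(h i j ij) n0; move: (lt_trans p n0); by rewrite ltxx.
  move=> /negP nC; have := t i j ij; rewrite neq_lt => /orP [] c //.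
  by case: nC; apply/(h i j ij).
move=> [t [e|e]]; split => //; [left|right]; first by apply/orient_psi.
move: e; rewrite psiN => /(orient_psi _ t) h i j ij; have := h i j ij; rewrite inE.
move=> [h1 h2]; split.
  move=> n0; apply/negPn/negP => /h2 p; move: (lt_trans p n0); by rewrite ltxx.
move=> c; have := t i j ij; rewrite neq_lt => /orP [] // p.
by move: (h1 p); rewrite c.
Qed.

Definition negrow (R : realDomainType) n (M : 'M[R]_(2, n)) : 'M[R]_(2, n) :=
  \matrix_(r, c) (if r == 0 then - M r c else M r c).

Lemma minor2_negrow (R : realDomainType) n (M : 'M[R]_(2, n)) i j :
  minor2 (negrow M) i j = - minor2 M i j.
Proof. rewrite !minor2E !mxE /=; ring. Qed.

Lemma isO_neg (R : realDomainType) n (O : 'M[int]_n) : isOrientMx R O -> isOrientMx R (- O).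
Proof.
move=> [M [t <-]]; exists (negrow M); split.
  by move=> i j ij; rewrite minor2_negrow oppr_eq0; apply: t.
by apply/matrixP => i j; rewrite !mxE minor2_negrow sgzN.
Qed.

Lemma same_of_psi (R : realDomainType) n (C D : {set 'I_n * 'I_n}) :
  psi D = psi C \/ psi D = - psi C -> same_stratum R C D.
Proof.
move=> e M; rewrite !stratum_iff.
by case: e => ->; rewrite ?opprK; split => -[t h]; split => //; case: h; tauto.
Qed.

Lemma Z2_iff (R : realDomainType) n (C D : {set 'I_n * 'I_n}) :
  nonempty_stratum R C -> nonempty_stratum R D ->
  (same_Z2_orbit (psi C) (psi D) <-> same_stratum R C D).
Proof.
move=> [_ [M hM]] _; split; first exact: same_of_psi.
move=> ss; have hD := (ss M).1 hM.
move: hM hD; rewrite !stratum_iff => -[_ hC] [_ hD].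
rewrite /same_Z2_orbit.
have eC : psi C = orient M \/ psi C = - orient M by case: hC => ->; rewrite ?opprK; tauto.
have eD : psi D = orient M \/ psi D = - orient M by case: hD => ->; rewrite ?opprK; tauto.
case: eC => ->; case: eD => ->; rewrite ?opprK; by [left|right].
Qed.

Definition C_of n (O : 'M[int]_n) : {set 'I_n * 'I_n} :=
  [set p : 'I_n * 'I_n | (p.1 < p.2)%N && (O p.1 p.2 == 1)].

Lemma F_anti n (a : 'I_n -> int) i j : F a j i = - F a i j.
Proof. rewrite !mxE (_ : (absz (a i))%:Z - (absz (a j))%:Z = - ((absz (a j))%:Z - (absz (a i))%:Z)); last by rewrite opprB.
by rewrite sgzN; ring. Qed.

Lemma F_pm n (a : 'I_n -> int) i j : signed_perm a -> i != j -> F a i j = 1 \/ F a i j = -1.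
Proof.
move=> sa ne; rewrite mxE.
have := sp_nz i sa; have := sp_nz j sa.
have : (absz (a j))%:Z - (absz (a i))%:Z != 0.
  rewrite subr_eq0; apply: contra ne => /eqP [] /sa.2 ->; by [].
move=> h1 h2 h3.
case: (sgz_cases h1) => ->; case: (sgz_cases h2) => ->; case: (sgz_cases h3) => ->; by [left|right].
Qed.

Lemma psi_C_of n (a : 'I_n -> int) : signed_perm a -> psi (C_of (F a)) = F a.
Proof.
move=> sa; apply/matrixP => i j; rewrite [LHS]mxE !inE /=.
case: (ltngtP i j) => c.
- have : i != j by rewrite neq_ltn c.
  by move/(F_pm sa) => [] ->.
- rewrite F_anti; have : i != j by rewrite neq_ltn c orbT.
  by move/(F_pm sa) => [] ->.
- have -> : i = j by apply/val_inj; exact: c.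
  by rewrite mxE subrr sgz0 mulr0.
Qed.

Lemma C_of_psi n (C : {set 'I_n * 'I_n}) : is_pairset C -> C_of (psi C) = C.
Proof.
move=> pc; apply/setP => -[i j]; rewrite !inE /= !mxE /=.
case: (ltnP i j) => c /=.
  by case: (_ \in C).
by apply/esym/negP => /pc /=; rewrite ltnNge c.
Qed.

Lemma normal_form (R : realType) n' (O : 'M[int]_n'.+2) : isOrientMx R O ->
  exists x : T1 n', O = F (mk x).
Proof.
move=> [M [t <-]].
have [a [sa ->]] := orient_sp (isT : (1 < n'.+2)%N) t.
have [m hm] := kit_reach ord0 sa.
have [x hx] := mk_surj (kit_sp m sa) hm.
by exists x; rewrite (F_ext hx) kit_F.
Qed.

Lemma nonempty_isO (R : realType) n (C : {set 'I_n * 'I_n}) :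
  nonempty_stratum R C -> isOrientMx R (psi C).
Proof.
move=> [_ [M]]; rewrite stratum_iff => -[t [e|e]].
  by exists M; split.
rewrite -[psi C]opprK -e; apply: isO_neg; by exists M.
Qed.

Definition T2 (n' : nat) := ({perm 'I_n'.+1} * {ffun 'I_n' -> bool})%type.
Definition ext n' (x : T2 n') : T1 n' :=
  (x.1, [ffun k : 'I_n'.+1 => if unlift ord0 k is Some k' then x.2 k' else false]).

Lemma ext_inj n' : injective (@ext n').
Proof.
move=> [s1 f1] [s2 f2] e; have /= e1 := congr1 fst e; congr pair => //.
apply/ffunP => k; have := congr1 (fun f : T1 n' => f.2 (lift ord0 k)) e; rewrite /= !ffunE.
by rewrite liftK.
Qed.

Lemma ext_surj n' (y : T1 n') : y.2 ord0 = false -> exists x, ext x = y.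
Proof.
move=> y0; exists (y.1, [ffun k : 'I_n' => y.2 (lift ord0 k)]).
case: y y0 => s f /= y0; congr pair; apply/ffunP => k; rewrite !ffunE.
by case: unliftP => [j ->|->]; rewrite ?ffunE.
Qed.

Lemma ext_0 n' (x : T2 n') : (ext x).2 ord0 = false.
Proof. by rewrite /ext /= ffunE unlift_none. Qed.

Lemma card_T1 n' : #|{: T1 n'}| = (2 ^ n'.+1 * n'.+1`!)%N.
Proof. by rewrite card_prod card_Sn card_ffun card_bool card_ord mulnC. Qed.

Lemma card_T2 n' : #|{: T2 n'}| = (2 ^ n' * n'.+1`!)%N.
Proof. by rewrite card_prod card_Sn card_ffun card_bool card_ord mulnC. Qed.

Unset Implicit Arguments.

Theorem mainTheorem5 (R : realType) (n : nat) (hn : (2 <= n)%N) :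
  (exists phi : 'M[int]_n -> 'M[int]_n,
      (forall A, isSignedPermMx A -> isOrientMx R (phi A)) /\
      (forall O, isOrientMx R O -> exists A, isSignedPermMx A /\ phi A = O) /\
      (forall A B, isSignedPermMx A -> isSignedPermMx B ->
         (phi A = phi B <-> same_right_coset A B))) /\
  (exists s : seq 'M[int]_n,
      uniq s /\ (forall O, O \in s <-> isOrientMx R O) /\
      size s = (2 ^ n.-1 * n.-1`!)%N) /\
  (exists psi : {set 'I_n * 'I_n} -> 'M[int]_n,
      (forall C, nonempty_stratum R C -> isOrientMx R (psi C)) /\
      (forall O, isOrientMx R O ->
         exists C, nonempty_stratum R C /\ same_Z2_orbit O (psi C)) /\
      (forall C D, nonempty_stratum R C -> nonempty_stratum R D ->
         (same_Z2_orbit (psi C) (psi D) <-> same_stratum R C D))) /\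
  (exists Cs : seq {set 'I_n * 'I_n},
      uniq Cs /\
      (forall C, C \in Cs -> nonempty_stratum R C) /\
      (forall C D, C \in Cs -> D \in Cs -> same_stratum R C D -> C = D) /\
      (forall C, nonempty_stratum R C -> exists2 D, D \in Cs & same_stratum R C D) /\
      size Cs = (2 ^ (n - 2) * n.-1`!)%N).
Proof.
case: n hn => [|[|n']] // hn.
split.
  exists (@phi R _); split; [|split].
  - move=> A [a [sa ->]]; exists (M0 R _ *m map_mx (fun z : int => z%:~R) (spm a)).
    by split; [exact: tnz_spm|].
  - move=> O [M [t <-]]; have [a [sa e]] := orient_sp hn t.
    by exists (spm a); split; [exists a|rewrite phi_spm // e].
  - move=> A B [a [sa ->]] [b [sb ->]]; rewrite !phi_spm //; exact: coset_F.
split.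
  exists [seq F (mk x) | x <- enum {: T1 n'}]; split; [|split].
  - rewrite map_inj_uniq ?enum_uniq // => x y e; apply: mk_inj.
    exact: (sp_uniq (mk_sp x) (mk_sp y) e (mk_0 x) (mk_0 y)).
  - move=> O; split.
      by move/mapP => [x _ ->]; exact: isO_F (mk_sp x).
    by move=> hO; have [x ->] := normal_form hO; apply/mapP; exists x; rewrite ?mem_enum.
  - by rewrite size_map -cardE card_T1.
have Z2part : forall C D : {set 'I_n'.+2 * 'I_n'.+2}, nonempty_stratum R C -> nonempty_stratum R D ->
         (same_Z2_orbit (psi C) (psi D) <-> same_stratum R C D).
  by move=> C D; exact: Z2_iff.
split.
  exists (@psi _); split; [|split] => //.
  - by move=> C; exact: nonempty_isO.
  - move=> O [M [t <-]].
    set C := C_of (orient M).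
    have e : orient M = psi C.
      apply/orient_psi => // i j ij; rewrite inE /= ij mxE (sgz_pos_iff (t i j ij)).
      by split => [->|/eqP].
    exists C; split; last by left.
    split; first by move=> p; rewrite inE => /andP [].
    by exists M; rewrite stratum_iff; split => //; left.
have Cs_ne : forall x : T2 n', nonempty_stratum R (C_of (F (mk (ext x)))).
  move=> x; split; first by move=> p; rewrite inE => /andP [].
  exists (M0 R _ *m map_mx (fun z : int => z%:~R) (spm (mk (ext x)))).
  rewrite stratum_iff; split; first exact: tnz_spm (mk_sp _).
  left; rewrite -/(phi R (spm (mk (ext x)))) (phi_spm _ (mk_sp _)).
  by rewrite (psi_C_of (mk_sp _)).
exists [seq C_of (F (mk (ext x))) | x <- enum {: T2 n'}]; split; [|split; [|split; [|split]]].
- rewrite map_inj_uniq ?enum_uniq // => x y e; apply: ext_inj; apply: mk_inj.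
  have := congr1 (@psi _) e; rewrite !(psi_C_of (mk_sp _)) => e'.
  exact: (sp_uniq (mk_sp _) (mk_sp _) e' (mk_0 _) (mk_0 _)).
- by move=> C /mapP [x _ ->].
- move=> C D /mapP [x _ ->] /mapP [y _ ->] ss.
  have := (Z2part _ _ (Cs_ne x) (Cs_ne y)).2 ss; rewrite !(psi_C_of (mk_sp _)).
  case=> [-> //|e].
  have := congr1 (fun A : 'M[int]_n'.+2 => A ord0 (inord 1)) e; rewrite /= mk_01 [X in _ = X -> _]mxE mk_01 !ext_0.
  by [].
- move=> C hC; have hO := nonempty_isO hC.
  have [x ex] := normal_form hO.
  case h0 : (x.2 ord0).
    have [y ey] := normal_form (isO_neg hO).
    have y0 : y.2 ord0 = false.
      have := congr1 (fun A : 'M[int]_n'.+2 => A ord0 (inord 1)) ey.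
      rewrite /= mxE ex mk_01 mk_01 h0 /sgb; by case: (y.2 ord0).
    have [z ez] := ext_surj y0.
    exists (C_of (F (mk y))); first by apply/mapP; exists z; rewrite ?mem_enum ?ez.
    apply: same_of_psi; right; by rewrite (psi_C_of (mk_sp _)) -ey.
  have [z ez] := ext_surj h0.
  exists (C_of (F (mk x))); first by apply/mapP; exists z; rewrite ?mem_enum ?ez.
  apply: same_of_psi; left; by rewrite (psi_C_of (mk_sp _)) -ex.
- by rewrite size_map -cardE card_T2 subSS subSS subn0.
Qed.
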